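(* The connected twin-free bipartite graphs of order $2k$ for which $i_{\max}(G)=k+1$ are in one-to-one correspondence with $k\times k$ binary matrices satisfying the following conditions: there is an all-$1$ row and an all-$1$ column; all columns are distinct, and all rows are distinct; the union (bitwise maximum) of any two rows is a row of the matrix itself.
   Context: $i_{\max}(G)$ denotes the number of maximal independent sets of $G$. A graph is twin-free if no two vertices have the same open neighbourhood. The correspondence is via the reduced (bipartite) adjacency matrix. *)

(* Defs.v *)
From mathcomp Require Import all_boot all_algebra.
Set Implicit Arguments. Unset Strict Implicit. Unset Printing Implicit Defensive.

Definition simple_graph (T : finType) (e : rel T) : Prop :=
  symmetric e /\ irreflexive e.

Definition independent (T : finType) (e : rel T) (S : {set T}) : bool :=
  [forall x in S, forall y in S, ~~ e x y].

Definition imax (T : finType) (e : rel T) : nat :=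
  #|[set S : {set T} | maxset (independent e) S]|.

Definition connected_graph (T : finType) (e : rel T) : Prop :=
  forall x y : T, connect e x y.

Definition twin_free (T : finType) (e : rel T) : Prop :=
  forall x y : T, [set z | e x z] = [set z | e y z] -> x = y.

Definition bipartite (T : finType) (e : rel T) : Prop :=
  exists c : T -> bool, forall x y, e x y -> c x != c y.

(* The bipartite graph with reduced adjacency matrix M: vertices inl i (rows)
   and inr j (columns), inl i ~ inr j iff M i j. *)
Definition bip_rel (k : nat) (M : 'M[bool]_k) : rel ('I_k + 'I_k) :=
  fun u v => match u, v with
             | inl i, inr j => M i j
             | inr j, inl i => M i j
             | _, _ => false
             end.

Definition good_matrix (k : nat) (M : 'M[bool]_k) : Prop :=
  [/\ (exists i, forall j, M i j),
      (exists j, forall i, M i j),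
      (forall j1 j2, (forall i, M i j1 = M i j2) -> j1 = j2),
      (forall i1 i2, (forall j, M i1 j = M i2 j) -> i1 = i2)
    & (forall i1 i2, exists i3, forall j, M i3 j = M i1 j || M i2 j)].

(* Main.v *)
Require Import Defs.
From mathcomp Require Import all_boot all_algebra.
From mathcomp Require Import zify.
Set Implicit Arguments. Unset Strict Implicit. Unset Printing Implicit Defensive.

Definition nbh (T : finType) (e : rel T) (X : {set T}) : {set T} :=
  [set y | [exists x in X, e x y]].

Lemma indepP (T : finType) (e : rel T) (S : {set T}) :
  reflect (forall x y, x \in S -> y \in S -> ~~ e x y) (independent e S).
Proof.
apply: (iffP forall_inP) => [H x y xS yS | H x xS].
  exact: (forall_inP (H x xS)).
by apply/forall_inP => y yS; apply: H.
Qed.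

Lemma maxsetE (T : finType) (e : rel T) (S : {set T}) :
  symmetric e -> irreflexive e -> maxset (independent e) S ->
  forall v, (v \in S) = ~~ [exists s in S, e s v].
Proof.
move=> sym irr /maxsetP [/indepP iS mS] v.
case vS: (v \in S).
  apply/esym/negP => /exists_inP [s sS esv].
  by move: (iS s v sS vS); rewrite esv.
apply/esym; apply: negbF; apply: contraT => nex.
have eq : v |: S = S.
  apply: mS; last exact: subsetUr.
  apply/indepP => x y; rewrite !in_setU1 => /predU1P [->|xS] /predU1P [->|yS].
  - by rewrite irr.
  - rewrite sym; apply/negP => eyv; case/negP: nex; apply/exists_inP; by exists y.
  - apply/negP => exv; case/negP: nex; apply/exists_inP; by exists x.
  - exact: iS.
by have := setU11 v S; rewrite eq vS.
Qed.

Lemma maxsetI (T : finType) (e : rel T) (S : {set T}) :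
  independent e S -> (forall v, v \notin S -> [exists s in S, e s v]) ->
  maxset (independent e) S.
Proof.
move=> iS H; apply/maxsetP; split=> // S' /indepP iS' sub.
apply/eqP; rewrite eqEsubset sub andbT.
apply/subsetP => v vS'; apply/negPn/negP => vnS.
have /exists_inP [s sS esv] := H v vnS.
by move: (iS' s v (subsetP sub s sS) vS'); rewrite esv.
Qed.

Lemma nbh1 (T : finType) (e : rel T) a : nbh e [set a] = [set z | e a z].
Proof.
apply/setP=> z; rewrite !inE; apply/exists_inP/idP => [[x]|eaz].
  by rewrite inE => /eqP ->.
by exists a; rewrite ?inE.
Qed.

Lemma nbh0 (T : finType) (e : rel T) : nbh e set0 = set0.
Proof.
apply/setP=> z; rewrite !inE; apply/exists_inP => [[x]]; by rewrite inE.
Qed.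

Lemma nbhU (T : finType) (e : rel T) X Y : nbh e (X :|: Y) = nbh e X :|: nbh e Y.
Proof.
apply/setP => z; rewrite !inE; apply/exists_inP/orP.
  case=> x; rewrite inE => /orP [xX|xY] exz; [left|right]; apply/exists_inP; by exists x.
case=> /exists_inP [x xX exz]; exists x => //; by rewrite inE ?xX ?xY ?orbT.
Qed.

Lemma imax_fam (T : finType) (e : rel T) (c : T -> bool) :
  symmetric e -> (forall x y, e x y -> c x != c y) ->
  imax e = #|[set nbh e X | X in powerset [set x | c x]]|.
Proof.
move=> sym bip.
have irr : irreflexive e by move=> x; apply/negP => /bip; rewrite eqxx.
rewrite /imax.
have inj : {in [set S | maxset (independent e) S] &,
             injective (fun S => nbh e (S :&: [set x | c x]))}.
  move=> S1 S2; rewrite !inE => m1 m2 eqN.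
  have HB : forall w, ~~ c w -> (w \in S1) = (w \in S2).
    move=> w cw; rewrite (maxsetE sym irr m1) (maxsetE sym irr m2).
    have E : forall S : {set T}, [exists s in S, e s w] = (w \in nbh e (S :&: [set x | c x])).
      move=> S; rewrite inE; apply/exists_inP/exists_inP => [[s sS esw]|[s]].
        exists s => //; rewrite !inE sS /=.
        by move: cw (bip _ _ esw); case: (c w); case: (c s).
      by rewrite inE => /andP [sS _] esw; exists s.
    by rewrite !E eqN.
  apply/setP => v; case cv: (c v); last by apply: HB; rewrite cv.
  rewrite (maxsetE sym irr m1) (maxsetE sym irr m2); congr (~~ _).
  apply/exists_inP/exists_inP => [[s sS esv]|[s sS esv]]; exists s => //.
    have cs : ~~ c s by move: (bip _ _ esv); rewrite cv; case: (c s).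
    by rewrite -HB.
  have cs : ~~ c s by move: (bip _ _ esv); rewrite cv; case: (c s).
  by rewrite HB.
rewrite -(card_in_imset inj).
apply: eq_card => Z; apply/imsetP/imsetP.
  case=> S; rewrite inE => mS ->; exists (S :&: [set x | c x]) => //.
  by rewrite powersetE subsetIr.
case=> X0; rewrite powersetE => sX0 ->.
pose Z0 := nbh e X0.
pose Y := [set y | ~~ c y && (y \notin Z0)].
pose X := [set x | c x && ~~ [exists y in Y, e y x]].
have nX : nbh e X = Z0.
  apply/setP => z; apply/idP/idP.
    rewrite inE => /exists_inP [x]; rewrite inE => /andP [cx nY] exz.
    apply/negPn/negP => zZ.
    case/negP: nY; apply/exists_inP; exists z; last by rewrite sym.
    rewrite inE zZ andbT.
    by move: (bip _ _ exz); rewrite cx; case: (c z).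
  move=> zZ; move: (zZ); rewrite inE => /exists_inP [x0 x0X ex0z].
  rewrite inE; apply/exists_inP; exists x0 => //.
  have := subsetP sX0 _ x0X; rewrite inE => cx0.
  rewrite inE cx0 /=; apply/exists_inP => [[y]]; rewrite inE => /andP [_ yZ] eyx0.
  case/negP: yZ; rewrite inE; apply/exists_inP; exists x0 => //; by rewrite sym.
exists (X :|: Y).
  rewrite inE; apply: maxsetI.
    apply/indepP => u v; rewrite !inE => uS vS.
    case/orP: uS => [/andP [cu nu] | /andP [cu uZ]];
      case/orP: vS => [/andP [cv nv]|/andP [cv vZ]].
    - by apply/negP => /bip; rewrite cu cv.
    - apply/negP => euv; case/negP: nu; apply/exists_inP; exists v.
        by rewrite inE cv /= /Z0 inE.
      by rewrite sym.
    - apply/negP => euv; case/negP: nv; apply/exists_inP; exists u => //.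
      by rewrite inE cu /= /Z0 inE.
    - by apply/negP => /bip; move: cu cv; case: (c u); case: (c v).
  move=> v; rewrite !inE negb_or => /andP [nX' nY'].
  case cv: (c v).
    rewrite cv /= negbK in nX'.
    case/exists_inP: nX' => y yY eyv; apply/exists_inP; exists y => //.
    by rewrite in_setU yY orbT.
  rewrite cv /= negbK in nY'.
  have : v \in Z0 by rewrite /Z0 inE. rewrite -nX inE => {}nY'.
  case/exists_inP: nY' => x xX exv; apply/exists_inP; exists x => //.
  by rewrite in_setU xX.
have -> : (X :|: Y) :&: [set x | c x] = X.
  apply/setP=> v; rewrite !inE.
  by case: (c v); rewrite /= ?orbF ?andbT ?andbF.
by rewrite nX.
Qed.

Lemma fam_lower (T : finType) (e : rel T) (c : T -> bool) :
  symmetric e -> twin_free e -> (forall x, exists y, e x y) ->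
  #|set0 |: [set nbh e [set a] | a in [set x | c x]]| = #|[set x | c x]|.+1
  /\ set0 |: [set nbh e [set a] | a in [set x | c x]]
       \subset [set nbh e X | X in powerset [set x | c x]].
Proof.
move=> sym tf nb; split.
  rewrite cardsU1 card_in_imset.
    case: imsetP => //= [[a _ E]].
    have [y eay] := nb a.
    by have := in_set0 y; rewrite E nbh1 inE eay.
  by move=> a1 a2 _ _; rewrite !nbh1 => /tf.
apply/subsetP => Z; rewrite in_setU1 => /predU1P [->|/imsetP [a aA ->]]; apply/imsetP.
  by exists set0; rewrite ?powersetE ?sub0set ?nbh0.
by exists [set a]; rewrite ?powersetE ?sub1set.
Qed.

Lemma fam_struct (T : finType) (e : rel T) (c : T -> bool) :
  set0 |: [set nbh e [set a] | a in [set x | c x]]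
       = [set nbh e X | X in powerset [set x | c x]] ->
  (forall x, exists y, e x y) ->
  forall X : {set T}, X \subset [set x | c x] -> X != set0 ->
  exists2 a, c a & nbh e X = nbh e [set a].
Proof.
move=> E nb X sX /set0Pn [x xX].
have : nbh e X \in [set nbh e X | X in powerset [set x | c x]].
  by apply/imsetP; exists X; rewrite ?powersetE.
rewrite -E in_setU1 => /predU1P [N0|/imsetP [a aA ->]].
  have [y exy] := nb x.
  have : y \in nbh e X by rewrite inE; apply/exists_inP; exists x.
  by rewrite N0 inE.
by exists a => //; move: aA; rewrite inE.
Qed.

Lemma dir2 (k : nat) (hk : 0 < k) (T : finType) (e : rel T) :
     simple_graph e -> #|T| = (2 * k)%N -> bipartite e ->
     connected_graph e -> twin_free e -> imax e = k.+1 ->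
     exists M : 'M[bool]_k, good_matrix M /\
       exists f : T -> 'I_k + 'I_k,
         bijective f /\ forall x y, e x y = bip_rel M (f x) (f y).
Proof.
move=> [sym irr] cardT [c bip] conn tf hmax.
have nb : forall x, exists y, e x y.
  move=> x.
  have : 0 < #|[set~ x]| by rewrite cardsC1 cardT; lia.
  case/card_gt0P => y; rewrite !inE => yx.
  have /connectP [p pth lst] := conn x y.
  case: p pth lst => [|z p] /=; first by move=> _ yx'; rewrite yx' eqxx in yx.
  by case/andP => exz _ _; exists z.
have bip' : forall x y, e x y -> ~~ c x != ~~ c y.
  by move=> x y /bip; case: (c x); case: (c y).
have [cA sA] := fam_lower c sym tf nb.
have [cB sB] := fam_lower (fun x => ~~ c x) sym tf nb.
have fA := imax_fam sym bip; have fB := imax_fam sym bip'.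
have leA := subset_leq_card sA; have leB := subset_leq_card sB.
have cAB : #|[set x | c x]| + #|[set x | ~~ c x]| = 2 * k.
  rewrite -cardT -(cardsC [set x | c x]); congr (_ + _).
  by apply: eq_card => x; rewrite !inE.
have kA : #|[set x | c x]| = k by lia.
have kB : #|[set x | ~~ c x]| = k by lia.
have eA : set0 |: [set nbh e [set a] | a in [set x | c x]]
       = [set nbh e X | X in powerset [set x | c x]].
  by apply/eqP; rewrite eqEcard sA /= -fA hmax cA kA.
have eB : set0 |: [set nbh e [set a] | a in [set x | ~~ c x]]
       = [set nbh e X | X in powerset [set x | ~~ c x]].
  by apply/eqP; rewrite eqEcard sB /= -fB hmax cB kB.
have stA := fam_struct eA nb; have stB := fam_struct eB nb.
have : 0 < #|[set x | c x]| by rewrite kA.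
case/card_gt0P => x0 x0A.
pose enA := enum [set x | c x]; pose enB := enum [set x | ~~ c x].
have szA : size enA = k by rewrite -cardE.
have szB : size enB = k by rewrite -cardE.
pose i0 := Ordinal hk.
pose g (u : 'I_k + 'I_k) := match u with inl i => nth x0 enA i | inr j => nth x0 enB j end.
pose f x := if c x then inl (insubd i0 (index x enA)) else inr (insubd i0 (index x enB)).
have fK : cancel f g.
  move=> x; rewrite /f /g; case cx: (c x).
    have xA : x \in enA by rewrite mem_enum inE.
    rewrite insubdK; first exact: nth_index. by rewrite unfold_in /= -szA index_mem.
  have xB : x \in enB by rewrite mem_enum inE cx.
  rewrite insubdK; first exact: nth_index. by rewrite unfold_in /= -szB index_mem.
have gA : forall i, c (g (inl i)).
  move=> i; have : nth x0 enA i \in enA by rewrite mem_nth // szA.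
  by rewrite mem_enum inE.
have gB : forall j, ~~ c (g (inr j)).
  move=> j; have : nth x0 enB j \in enB by rewrite mem_nth // szB.
  by rewrite mem_enum inE.
have gK : cancel g f.
  case=> [i|j]; rewrite /f.
    rewrite gA /= index_uniq ?enum_uniq ?szA //; by rewrite valKd.
  rewrite (negbTE (gB j)) /= index_uniq ?enum_uniq ?szB //; by rewrite valKd.
have gAs : forall a, c a -> exists i, g (inl i) = a.
  move=> a ca; exists (insubd i0 (index a enA)); by have := fK a; rewrite /f ca.
have gBs : forall b, ~~ c b -> exists j, g (inr j) = b.
  move=> b cb; exists (insubd i0 (index b enB)); by have := fK b; rewrite /f (negbTE cb).
pose M : 'M[bool]_k := (\matrix_(i, j) e (g (inl i)) (g (inr j)))%R.
have H : forall u v, e (g u) (g v) = bip_rel M u v.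
  case=> [i|j] [i'|j']; rewrite [bip_rel _ _ _]/= ?mxE //.
  - by apply/negP => /bip; rewrite !gA.
  - by apply/negP => /bip; move: (gB j) (gB j'); case: (c _); case: (c _).
have HM : forall i j, M i j = e (g (inl i)) (g (inr j)) by move=> i j; rewrite mxE.
exists M; split; last first.
  exists f; split; first by exists g.
  by move=> x y; rewrite -H !fK.
have nbA : forall b, ~~ c b -> b \in nbh e [set x | c x].
  move=> b cb; have [y eby] := nb b.
  rewrite inE; apply/exists_inP; exists y; last by rewrite sym.
  by rewrite inE; move: cb (bip _ _ eby); case: (c b); case: (c y).
have nbB : forall a, c a -> a \in nbh e [set x | ~~ c x].
  move=> a ca; have [y eay] := nb a.
  rewrite inE; apply/exists_inP; exists y; last by rewrite sym.
  by rewrite inE; move: ca (bip _ _ eay); case: (c a); case: (c y).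
have pair : forall a1 a2 z, (z \in nbh e [set a1; a2]) = e a1 z || e a2 z.
  by move=> a1 a2 z; rewrite nbhU !nbh1 !inE.
split.
- have nA0 : [set x | c x] != set0 by apply/set0Pn; exists x0.
  have [a ca Ea] := stA _ (subxx _) nA0.
  have [i Ei] := gAs a ca; subst a; exists i => j.
  by rewrite HM; have := nbA _ (gB j); rewrite Ea nbh1 inE.
- have nB0 : [set x | ~~ c x] != set0.
    by apply/set0Pn; exists (g (inr i0)); rewrite inE gB.
  have [b cb Eb] := stB _ (subxx _) nB0.
  have [j Ej] := gBs b cb; subst b; exists j => i.
  by rewrite HM sym; have := nbB _ (gA i); rewrite Eb nbh1 inE.
- move=> j1 j2 Hj.
  have : g (inr j1) = g (inr j2).
    apply: tf; apply/setP => z; rewrite !inE -(fK z) !H.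
    by case: (f z) => [i|j] //=; rewrite Hj.
  by move/(can_inj gK) => [].
- move=> i1 i2 Hi.
  have : g (inl i1) = g (inl i2).
    apply: tf; apply/setP => z; rewrite !inE -(fK z) !H.
    by case: (f z) => [i|j] //=; rewrite Hi.
  by move/(can_inj gK) => [].
- move=> i1 i2.
  have [||a ca Ea] := stA [set g (inl i1); g (inl i2)].
  + by apply/subsetP => z; rewrite !inE => /orP [] /eqP ->; rewrite gA.
  + by apply/set0Pn; exists (g (inl i1)); rewrite !inE eqxx.
  have [i3 Ei] := gAs a ca; subst a; exists i3 => j.
  by rewrite !HM -pair Ea nbh1 inE.
Qed.

Lemma dir1 (k : nat) (M : 'M[bool]_k) : good_matrix M ->
  connected_graph (bip_rel M) /\ twin_free (bip_rel M) /\
  imax (bip_rel M) = k.+1.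
Proof.
case=> [[i0 Hi0] [j0 Hj0] cdist rdist uni].
have sym : symmetric (bip_rel M) by case=> ? [] ?.
pose c (u : 'I_k + 'I_k) := if u is inl _ then true else false.
have bip : forall x y, bip_rel M x y -> c x != c y by case=> ? [] ?.
have conn : connected_graph (bip_rel M).
  have to0 : forall x, connect (bip_rel M) x (inl i0).
    case=> [i|j].
      apply: (connect_trans (y := inr j0)); apply: connect1; [exact: Hj0 | exact: Hi0].
    apply: connect1; exact: Hi0.
  have from0 : forall y, connect (bip_rel M) (inl i0) y.
    case=> [i|j].
      apply: (connect_trans (y := inr j0)); apply: connect1; [exact: Hi0 | exact: Hj0].
    apply: connect1; exact: Hi0.
  move=> x y; exact: connect_trans (to0 x) (from0 y).
have nb : forall x, exists y, bip_rel M x y.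
  by case=> [i|j]; [exists (inr j0) | exists (inl i0)]; [exact: Hj0|exact: Hi0].
have tf : twin_free (bip_rel M).
  have key : forall x y, [set z | bip_rel M x z] = [set z | bip_rel M y z] ->
      forall z, bip_rel M x z = bip_rel M y z.
    by move=> x y E z; have := congr1 (fun S : {set _} => z \in S) E; rewrite /= !inE.
  case=> [i1|j1] [i2|j2] /key E.
  - congr inl; apply: rdist => j; exact: (E (inr j)).
  - by have := E (inr j0); rewrite /= Hj0.
  - by have := E (inr j0); rewrite /= Hj0.
  - congr inr; apply: cdist => i; exact: (E (inl i)).
split => //; split => //.
rewrite (imax_fam sym bip).
have [cA sA] := fam_lower c sym tf nb.
have kA : #|[set x | c x]| = k.
  have -> : [set x | c x] = inl @: [set: 'I_k].
    apply/setP => -[i|j]; rewrite !inE /=.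
      by apply/esym/imsetP; exists i; rewrite ?inE.
    by apply/esym/negbTE/negP => /imsetP [i _].
  by rewrite card_imset ?cardsT ?card_ord //; move=> ? ? [].
have uni' : forall n (X : {set 'I_k + 'I_k}), #|X| = n.+1 ->
    X \subset [set x | c x] ->
    exists i, nbh (bip_rel M) X = nbh (bip_rel M) [set inl i].
  elim=> [|n IH] X cX sX.
    have /cards1P [x Ex] : #|X| == 1 by rewrite cX.
    subst X; move: sX; rewrite sub1set inE; case: x {cX} => // i _; by exists i.
  have : 0 < #|X| by rewrite cX.
  case/card_gt0P => x xX.
  have cX' : #|X :\ x| = n.+1 by move: cX; rewrite (cardsD1 x X) xX add1n => -[].
  have sX' : X :\ x \subset [set x | c x].
    by apply: subset_trans sX; apply: subsetDl.
  have [i' Ei'] := IH _ cX' sX'.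
  have [i2 Ex] : exists i2, x = inl i2.
    by move: (subsetP sX x xX); rewrite inE; case: x {xX cX' sX' Ei' cX} => // i2 _; exists i2.
  subst x.
  have [i3 E3] := uni i' i2.
  exists i3; rewrite -(setD1K xX) nbhU Ei'.
  apply/setP => z; rewrite !in_setU !nbh1 !inE; case: z => [i|j] //=.
  by rewrite E3 orbC.
have eq : [set nbh (bip_rel M) X | X in powerset [set x | c x]]
    = set0 |: [set nbh (bip_rel M) [set a] | a in [set x | c x]].
  apply/eqP; rewrite eqEsubset sA andbT.
  apply/subsetP => Z /imsetP [X]; rewrite powersetE => sX ->.
  case: (set_0Vmem X) => [->|[x xX]].
    by rewrite nbh0 in_setU1 eqxx.
  have cX : #|X| = (#|X|.-1).+1.
    by rewrite prednK //; apply/card_gt0P; exists x.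
  have [i Ei] := uni' _ X cX sX.
  rewrite in_setU1 Ei; apply/orP; right; apply/imsetP; exists (inl i) => //.
  by rewrite inE.
by rewrite eq cA kA.
Qed.

Theorem proposition3p3 (k : nat) (hk : 0 < k) :
  (forall M : 'M[bool]_k, good_matrix M ->
     connected_graph (bip_rel M) /\ twin_free (bip_rel M) /\
     imax (bip_rel M) = k.+1)
  /\
  (forall (T : finType) (e : rel T),
     simple_graph e -> #|T| = (2 * k)%N -> bipartite e ->
     connected_graph e -> twin_free e -> imax e = k.+1 ->
     exists M : 'M[bool]_k, good_matrix M /\
       exists f : T -> 'I_k + 'I_k,
         bijective f /\ forall x y, e x y = bip_rel M (f x) (f y)).
Proof.
split; first exact: dir1.
exact: dir2.
Qed.
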